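(* Let $G$ be a connected nontrivial graph with $m$ vertices and let $n\geq3$. If $\min\{3n\lambda(G),\ 2(m+2e(G))\}\geq 6\delta(G)+2$, then $G\boxtimes C_n$ is maximally restricted edge-connected, i.e. $\lambda'(G\boxtimes C_n)=\xi(G\boxtimes C_n)$.
   Context: All graphs are finite, simple and undirected; ''nontrivial'' means having at least two vertices. $C_n$ denotes the cycle on $n$ vertices. For a graph $G$: $e(G)=|E(G)|$; $\delta(G)$ is the minimum degree; $\lambda(G)$ is the edge-connectivity; for an edge $uv$, its edge-degree is $d_G(u)+d_G(v)-2$, and $\xi(G)$ is the minimum edge-degree over all edges. A restricted edge-cut of a connected graph $G$ is a set $S\subseteq E(G)$ such that $G-S$ is disconnected and every component of $G-S$ has at least $2$ vertices; $\lambda'(G)$ is the minimum cardinality of a restricted edge-cut. A graph $G$ is maximally restricted edge-connected if $\lambda'(G)=\xi(G)$. The strong product $G\boxtimes H$ has vertex set $V(G)\times V(H)$, with $(x_1,y_1)$ and $(x_2,y_2)$ adjacent iff either $x_1=x_2$ and $y_1y_2\in E(H)$, or $y_1=y_2$ and $x_1x_2\in E(G)$, or $x_1x_2\in E(G)$ and $y_1y_2\in E(H)$. (One has $\xi(G\boxtimes C_n)=6\delta(G)+2$.) *)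

(* Defs.v *)
(* A simple graph is a symmetric irreflexive relation on a finType. *)
From mathcomp Require Import all_boot.
Set Implicit Arguments. Unset Strict Implicit. Unset Printing Implicit Defensive.

Section Graphs.
Variable T : finType.
Implicit Type g : rel T.

Definition connected g := forall x y : T, connect g x y.

Definition edges g : {set {set T}} :=
  [set A : {set T} | [exists x, exists y, g x y && (A == [set x; y])]].

Definition deg g (x : T) : nat := #|[set y | g x y]|.
Definition mindeg g : nat := \big[minn/#|T|]_(x : T) deg g x.

Definition xi g : nat :=
  \big[minn/(2 * #|T|)]_(p : T * T | g p.1 p.2) (deg g p.1 + deg g p.2 - 2).

Definition remove_edges g (S : {set {set T}}) : rel T :=
  fun x y => g x y && ([set x; y] \notin S).

Definition is_edge_cut g (S : {set {set T}}) : bool :=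
  (S \subset edges g) && [exists x, exists y, ~~ connect (remove_edges g S) x y].

Definition is_restricted_edge_cut g (S : {set {set T}}) : bool :=
  is_edge_cut g S &&
  [forall x, exists y, (y != x) && connect (remove_edges g S) x y].

(* lambda(G), lambda'(G): minimum cardinality of an (restricted) edge-cut.
   The default #|E(G)|.+1 acts as "infinity" (every cut has size <= #|E(G)|). *)
Definition lam g : nat :=
  \big[minn/(#|edges g|).+1]_(S : {set {set T}} | is_edge_cut g S) #|S|.
Definition lam' g : nat :=
  \big[minn/(#|edges g|).+1]_(S : {set {set T}} | is_restricted_edge_cut g S) #|S|.
End Graphs.

Definition cycle_rel (n : nat) : rel 'I_n :=
  fun i j => (nat_of_ord j == i.+1 %% n) || (nat_of_ord i == j.+1 %% n).

Definition strong (A B : finType) (g : rel A) (h : rel B) : rel (A * B) :=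
  fun u v => [|| (u.1 == v.1) && h u.2 v.2,
                 (u.2 == v.2) && g u.1 v.1
               | g u.1 v.1 && h u.2 v.2].
Arguments cycle_rel n : clear implicits.

(* Main.v *)
Require Import Defs.
From mathcomp Require Import all_boot zify.
Set Implicit Arguments. Unset Strict Implicit. Unset Printing Implicit Defensive.

Section Cyc.
Variable n : nat.
Hypothesis n3 : 2 < n.

Lemma n0 : 0 < n. Proof. lia. Qed.

Definition sc (i : 'I_n) : 'I_n := Ordinal (ltn_pmod i.+1 n0).
Definition pc (i : 'I_n) : 'I_n := Ordinal (ltn_pmod (i + n.-1) n0).

Lemma modS_eq (i : nat) : i < n -> i.+1 %% n = if i.+1 < n then i.+1 else 0.
Proof.
move=> hi; case: ifP => h; first by rewrite modn_small.
have -> : i.+1 = n by lia.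
by rewrite modnn.
Qed.

Lemma modP_eq (i : nat) : i < n -> (i + n.-1) %% n = if i == 0 then n.-1 else i.-1.
Proof.
move=> hi; case: ifP => h.
  by rewrite (eqP h) add0n modn_small //; lia.
have -> : i + n.-1 = i.-1 + n by lia.
by rewrite modnDr modn_small //; lia.
Qed.

Lemma val_sc i : val (sc i) = if i.+1 < n then i.+1 else 0.
Proof. by rewrite /= modS_eq. Qed.
Lemma val_pc i : val (pc i) = if val i == 0 then n.-1 else (val i).-1.
Proof. by rewrite /= modP_eq. Qed.

Lemma scK : cancel sc pc.
Proof.
move=> i; apply/val_inj; rewrite val_pc val_sc.
have := ltn_ord i; case: (ltnP i.+1 n) => h1 /= hi; lia.
Qed.
Lemma pcK : cancel pc sc.
Proof.
move=> i; apply/val_inj; rewrite val_sc val_pc.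
case: i => [[|k] hk] /=; case: ltnP => h2; lia.
Qed.
Lemma sc_inj : injective sc. Proof. exact: can_inj scK. Qed.
Lemma pc_inj : injective pc. Proof. exact: can_inj pcK. Qed.

Lemma sc_neq i : (sc i == i) = false.
Proof. apply/negbTE/eqP => h; have := congr1 val h; rewrite val_sc; case: i h => [[|k] hk] /= _; case: ltnP; lia. Qed.
Lemma pc_neq i : (pc i == i) = false.
Proof. apply/negbTE/eqP => h; have := congr1 val h; rewrite val_pc; case: i h => [[|k] hk] /= _; lia. Qed.
Lemma sc_pc_neq i : (sc i == pc i) = false.
Proof.
apply/negbTE/eqP => h; have := congr1 val h; rewrite val_pc val_sc.
case: i h => [[|k] hk] /= _; case: ltnP; lia.
Qed.

Lemma cycE i j : cycle_rel n i j = (j == sc i) || (j == pc i).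
Proof.
rewrite /cycle_rel; congr orb.
apply/eqP/eqP => [h|->].
  have hi : i = sc j by apply: val_inj.
  by rewrite hi scK.
by rewrite -[X in val X]pcK.
Qed.

Lemma sum_sc (F : 'I_n -> nat) : \sum_i F (sc i) = \sum_i F i.
Proof. by rewrite [RHS](reindex_inj sc_inj). Qed.
Lemma sum_pc (F : 'I_n -> nat) : \sum_i F (pc i) = \sum_i F i.
Proof. by rewrite [RHS](reindex_inj pc_inj). Qed.

Lemma iter_sc m i : val (iter m sc i) = (i + m) %% n.
Proof.
elim: m => [|m IH] /=; first by rewrite addn0 modn_small.
by rewrite IH addnS -addn1 modnDml addn1.
Qed.

Lemma down (a : 'I_n -> bool) : [exists i, a i] -> [exists i, ~~ a i] ->
  exists k, a k && ~~ a (sc k).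
Proof.
move=> /existsP[i ai] /existsP[j naj].
case: (pickP (fun k => a k && ~~ a (sc k))) => [k hk|h]; first by exists k.
have hi : forall m, a (iter m sc i).
  elim=> [|m IH] //=; move: (h (iter m sc i)); rewrite IH /=; by move/negbFE.
have : iter (j + n - i) sc i = j.
  apply: val_inj; rewrite iter_sc.
  have -> : i + (j + n - i) = j + n by have := ltn_ord i; lia.
  by rewrite modnDr modn_small.
by move=> e; move: (hi (j + n - i)); rewrite e (negbTE naj).
Qed.

Lemma sum_ge1 (P : 'I_n -> bool) : (exists k, P k) -> 1 <= \sum_i (P i : nat).
Proof. by case=> k Pk; rewrite (bigD1 k) //= Pk. Qed.

Definition cnt (a : 'I_n -> bool) := \sum_i (a i : nat).
Definition mixed (a : 'I_n -> bool) := [exists i, a i] && [exists i, ~~ a i].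
Definition chg (a : 'I_n -> bool) := \sum_i (a i != a (sc i) : nat).

Lemma chg_ge2 (a : 'I_n -> bool) : mixed a -> 2 <= chg a.
Proof.
case/andP=> h1 h2.
have l1 : 1 <= \sum_i (a i && ~~ a (sc i) : nat) by apply: sum_ge1; apply: down.
have l2 : 1 <= \sum_i ((~~ a i) && ~~ ~~ a (sc i) : nat).
  apply: sum_ge1; apply: down; first exact: h2.
  by case/existsP: h1 => i ai; apply/existsP; exists i; rewrite ai.
have : \sum_i ((a i && ~~ a (sc i)) + (~~ a i && ~~ ~~ a (sc i))) <= chg a.
  by apply: leq_sum => i _; case: (a i); case: (a (sc i)).
rewrite big_split /= => h; apply: leq_trans h; exact: (leq_add l1 l2).
Qed.

Definition Fin (a : 'I_n -> bool) :=
  \sum_i ((a i && ~~ a (sc i)) + (a i && ~~ a (pc i))).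
Definition Fcr (a b : 'I_n -> bool) :=
  \sum_i ((a i && ~~ b i) + (a i && ~~ b (sc i)) + (a i && ~~ b (pc i))).

Lemma Fin_mixed (a : 'I_n -> bool) : mixed a -> 2 <= Fin a.
Proof.
move=> m; have := chg_ge2 m.
rewrite /Fin /chg big_split /=.
rewrite -(sum_sc (fun i => a i && ~~ a (pc i))) /=.
under [X in _ <= _ + X]eq_bigr => i _ do rewrite scK.
rewrite -big_split /=.
move=> h; apply: (leq_trans h); apply: leq_sum => i _.
by case: (a i); case: (a (sc i)).
Qed.

Lemma cnt_ge1 (a : 'I_n -> bool) : [exists i, a i] -> 1 <= cnt a.
Proof. by case/existsP=> i ai; apply: sum_ge1; exists i. Qed.

Lemma cnt_all : cnt (fun _ => true) = n.
Proof. by rewrite /cnt sum1_card card_ord. Qed.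

Lemma Fcr_empty (a b : 'I_n -> bool) : (forall i, ~~ b i) -> Fcr a b = 3 * cnt a.
Proof.
move=> hb; rewrite /Fcr /cnt big_distrr /=; apply: eq_bigr => i _.
by rewrite !hb !andbT; case: (a i).
Qed.

Lemma Fcr_full (a b : 'I_n -> bool) : (forall i, a i) -> Fcr a b = 3 * cnt (fun i => ~~ b i).
Proof.
move=> ha; rewrite /Fcr /cnt.
under eq_bigr => i _ do rewrite !ha /=.
rewrite !big_split /= (sum_sc (fun i => (~~ b i : nat))) (sum_pc (fun i => (~~ b i : nat))).
by rewrite !mulSn mul0n addn0 addnA.
Qed.

Lemma FcrE (a b : 'I_n -> bool) : Fcr a b =
  \sum_i ((a i && ~~ b i) + (a i && ~~ b (sc i)) + (a (sc i) && ~~ b i)).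
Proof.
rewrite /Fcr !big_split /=; congr (_ + _).
rewrite -(sum_sc (fun i => a i && ~~ b (pc i))) /=.
by apply: eq_bigr => i _; rewrite scK.
Qed.

Lemma KE (a b : 'I_n -> bool) : Fcr a b + Fcr b a =
  \sum_i ((a i != b i) + ((a i != b (sc i)) + (a (sc i) != b i))).
Proof.
rewrite !FcrE -big_split /=; apply: eq_bigr => i _.
by case: (a i); case: (b i); case: (a (sc i)); case: (b (sc i)).
Qed.

Lemma K_mixed (a b : 'I_n -> bool) : mixed a -> mixed b -> 4 <= Fcr a b + Fcr b a.
Proof.
move=> ma mb.
pose c := fun i => a i != b i.
pose w := fun i => (a i != b (sc i)) + (a (sc i) != b i).
have -> : Fcr a b + Fcr b a = \sum_i (c i : nat) + \sum_i w i by rewrite KE big_split.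
have P1 : chg c <= \sum_i w i.
  apply: leq_sum => i _; rewrite /c /w.
  by case: (a i); case: (b i); case: (a (sc i)); case: (b (sc i)).
have P2 : chg a + chg b <= \sum_i w i + 2 * \sum_i (c i && c (sc i) : nat).
  rewrite /chg -big_split big_distrr -big_split /=; apply: leq_sum => i _; rewrite /c /w.
  by case: (a i); case: (b i); case: (a (sc i)); case: (b (sc i)).
have Q : \sum_i (c i : nat) = \sum_i (c i && c (sc i) : nat) + \sum_i (c i && ~~ c (sc i) : nat).
  rewrite -big_split; apply: eq_bigr => i _; by case: (c i); case: (c (sc i)).
have ca := chg_ge2 ma; have cb := chg_ge2 mb.
case: (leqP 4 (\sum_i (c i : nat))) => hC; first lia.
case: (boolP [exists i, c i]) => ec; last first.
  have : \sum_i (c i && c (sc i) : nat) = 0.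
    apply/eqP; rewrite sum_nat_eq0; apply/forallP => i; apply/implyP => _.
    by apply/eqP; move/existsPn: ec => /(_ i) /negbTE ->.
  lia.
case: (boolP [exists i, ~~ c i]) => nc; last first.
  have allc : forall i, c i by move=> i; move/existsPn: nc => /(_ i); rewrite negbK.
  have Cn : \sum_i (c i : nat) = n.
    transitivity (cnt (fun _ => true)); last exact: cnt_all.
    by apply: eq_bigr => i _; rewrite allc.
  have ex : exists i, a i == a (sc i).
    case: (pickP (fun i => a i == a (sc i))) => [k hk|h]; first by exists k.
    have e3 : forall i, a (sc (sc (sc i))) = ~~ a i.
      move=> i; move: (h i) (h (sc i)) (h (sc (sc i))).
      by case: (a i); case: (a (sc i)); case: (a (sc (sc i))); case: (a (sc (sc (sc i)))).
    have n3' : n = 3 by lia.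
    case/andP: ma => /existsP[i _] _.
    have e : iter 3 sc i = i.
      apply: val_inj; rewrite iter_sc.
      have -> : i + 3 = i + n by lia.
      by rewrite modnDr modn_small.
    have e' : sc (sc (sc i)) = i := e.
    by move: (e3 i); rewrite e'; case: (a i).
  case: ex => k hk.
  have : 2 <= \sum_i w i.
    rewrite (bigD1 k) //=; apply: leq_trans (leq_addr _ _).
    move: (allc k) (allc (sc k)) hk; rewrite /c /w.
    by case: (a k); case: (b k); case: (a (sc k)); case: (b (sc k)).
  lia.
have P3 : \sum_i (c i && ~~ c (sc i) : nat) >= 1 by apply: sum_ge1; apply: down.
have mc : mixed c by rewrite /mixed ec nc.
have := chg_ge2 mc.
lia.
Qed.
Lemma nonmixed (b : 'I_n -> bool) : ~~ mixed b -> (forall i, b i) \/ (forall i, ~~ b i).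
Proof.
rewrite /mixed negb_and => /orP[/existsPn h|/existsPn h]; [right|left] => //.
by move=> i; move: (h i); rewrite negbK.
Qed.

Lemma K_one (a b : 'I_n -> bool) : mixed a -> 3 <= Fcr a b + Fcr b a.
Proof.
move=> ma; case: (boolP (mixed b)) => mb.
  by apply: leq_trans (K_mixed ma mb).
case: (nonmixed mb) => hb.
  rewrite (Fcr_full a hb); case/andP: ma => _ ex.
  have : 1 <= cnt (fun i => ~~ a i) by apply: cnt_ge1.
  lia.
rewrite (Fcr_empty a hb); case/andP: ma => ex _.
have : 1 <= cnt a by apply: cnt_ge1.
lia.
Qed.
Lemma nbr2 (P : 'I_n -> bool) i :
  \sum_j (P j && ((j == sc i) || (j == pc i)) : nat) = P (sc i) + P (pc i).
Proof.
rewrite (bigD1 (sc i)) //= eqxx orTb andbT.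
rewrite (bigD1 (pc i)) /=; last by rewrite eq_sym sc_pc_neq.
rewrite eqxx orbT andbT big1 ?addn0 // => j /andP[h1 h2]; move: h1; rewrite ?andTb => h1.
by rewrite (negbTE h1) (negbTE h2) andbF.
Qed.

Lemma nbr3 (P : 'I_n -> bool) i :
  \sum_j (P j && [|| j == i, j == sc i | j == pc i] : nat) = P i + P (sc i) + P (pc i).
Proof.
rewrite (bigD1 i) //= eqxx orTb andbT -addnA; congr (_ + _).
rewrite -nbr2 [RHS](bigD1 i) //= [i == sc i]eq_sym sc_neq [i == pc i]eq_sym pc_neq andbF add0n.
apply: eq_bigr => j hj; move: hj; rewrite ?andTb => hj; by rewrite (negbTE hj).
Qed.

Lemma cnt_ge2 (a : 'I_n -> bool) i j : i != j -> a i -> a j -> 2 <= cnt a.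
Proof.
move=> ij ai aj; rewrite /cnt (bigD1 i) //= (bigD1 j) /=; last by rewrite eq_sym ij.
by rewrite ai aj.
Qed.

Lemma cnt_compl (a : 'I_n -> bool) : cnt a + cnt (fun i => ~~ a i) = n.
Proof.
rewrite /cnt -big_split /=; transitivity (cnt (fun _ => true)); last exact: cnt_all.
by apply: eq_bigr => i _; case: (a i).
Qed.
End Cyc.


Lemma bigmin_le (I : finType) (P : pred I) (F : I -> nat) d i :
  P i -> \big[minn/d]_(j | P j) F j <= F i.
Proof.
rewrite unlock /reducebig => Pi.
have : i \in index_enum I by rewrite mem_index_enum.
elim: (index_enum I) => //= x r IH; rewrite in_cons => /orP[/eqP<-|ir].
  by rewrite Pi geq_minl.
by case: (P x); rewrite ?IH // (leq_trans (geq_minr _ _)) ?IH.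
Qed.

Lemma bigmin_ge (I : finType) (P : pred I) (F : I -> nat) d k :
  k <= d -> (forall i, P i -> k <= F i) -> k <= \big[minn/d]_(j | P j) F j.
Proof.
move=> kd h; elim/big_ind: _ => // x y hx hy; by rewrite leq_min hx hy.
Qed.

Lemma bigmin_arg (I : finType) (F : I -> nat) d :
  (exists i, F i < d) -> exists i, \big[minn/d]_j F j = F i.
Proof.
case=> i0 hi0.
have : (\big[minn/d]_j F j == d) || [exists i, \big[minn/d]_j F j == F i].
  elim/big_ind: _ => [|x y|j _]; first by rewrite eqxx.
    by move=> hx hy; rewrite /minn; case: ltnP.
  by apply/orP; right; apply/existsP; exists j.
case/orP=> [/eqP e|/existsP[i /eqP e]]; last by exists i.
have := bigmin_le (P := predT) F d (isT : predT i0); rewrite e; lia.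
Qed.

Lemma sum_pair (U W : finType) (G : U * W -> nat) :
  \sum_(p : U * W) G p = \sum_u \sum_w G (u, w).
Proof. by rewrite pair_big /=; apply: eq_bigr => -[u w]. Qed.

Lemma card_setsum (U : finType) (P : pred U) : #|[set u | P u]| = \sum_u (P u : nat).
Proof. by rewrite -sum1dep_card big_mkcond /=; apply: eq_bigr => u _; case: (P u). Qed.

Section Bd.
Variable U : finType.
Variable e : rel U.

Definition ecnt (A : {set U}) := \sum_u \sum_w ((u \in A) && (w \notin A) && e u w : nat).
Definition BdP (A : {set U}) := [set p : U * U | (p.1 \in A) && (p.2 \notin A) && e p.1 p.2].
Definition Bd (A : {set U}) : {set {set U}} := [set [set p.1; p.2] | p in BdP A].

Lemma BdP_card A : #|BdP A| = ecnt A.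
Proof. by rewrite card_setsum sum_pair. Qed.

Lemma Bd_card A : #|Bd A| = ecnt A.
Proof.
rewrite -BdP_card card_in_imset // => -[a b] [c d]; rewrite !inE /= => /andP[/andP[ha hb] _]
  /andP[/andP[hc hd] _] E.
have : a \in [set c; d] by rewrite -E !inE eqxx.
have : b \in [set c; d] by rewrite -E !inE eqxx orbT.
rewrite !inE => /orP[/eqP eb|/eqP eb] /orP[/eqP ea|/eqP ea]; subst.
- by rewrite hc in hb.
- by rewrite hc in hb.
- by [].
- by rewrite ha in hd.
Qed.

Lemma Bd_sub A : Bd A \subset edges e.
Proof.
apply/subsetP => S /imsetP[[a b]]; rewrite !inE /= => /andP[_ hab] ->.
by apply/existsP; exists a; apply/existsP; exists b; rewrite hab eqxx.
Qed.

Lemma Bd_mem A S : S \in Bd A -> exists2 u, u \in A & u \in S.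
Proof.
case/imsetP=> -[a b]; rewrite !inE /= => /andP[/andP[ha _] _] ->.
by exists a; rewrite // !inE eqxx.
Qed.

Lemma Bd_mem' A S : S \in Bd A -> exists2 u, u \notin A & u \in S.
Proof.
case/imsetP=> -[a b]; rewrite !inE /= => /andP[/andP[_ hb] _] ->.
by exists b; rewrite // !inE eqxx orbT.
Qed.

Hypothesis syme : symmetric e.

Lemma Bd_closed A : closed (remove_edges e (Bd A)) A.
Proof.
move=> u w; rewrite /remove_edges => /andP[euw nS].
case: (boolP (u \in A)) => hu; case: (boolP (w \in A)) => hw //.
  suff : [set u; w] \in Bd A by rewrite (negbTE nS).
  by apply/imsetP; exists (u, w); rewrite // !inE /= hu hw euw.
suff : [set u; w] \in Bd A by rewrite (negbTE nS).
apply/imsetP; exists (w, u); last by rewrite /= setUC.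
by rewrite !inE /= hu hw syme euw.
Qed.

Lemma Bd_disc (A : {set U}) (u w : U) : u \in A -> w \notin A -> ~~ connect (remove_edges e (Bd A)) u w.
Proof.
move=> hu hw; apply/negP => /(closed_connect (@Bd_closed A)).
by rewrite hu (negbTE hw).
Qed.

Lemma lam_le (A : {set U}) (u w : U) : u \in A -> w \notin A -> lam e <= ecnt A.
Proof.
move=> hu hw; rewrite -Bd_card; apply: bigmin_le.
rewrite /is_edge_cut Bd_sub /=; apply/existsP; exists u; apply/existsP; exists w.
exact: Bd_disc.
Qed.
End Bd.

Section Decomp.
Variable U : finType.
Variable F : U -> U -> nat.

Lemma D1 x : \sum_a \sum_b F a b =
  F x x + \sum_(b | b != x) (F x b + F b x) + \sum_(a | a != x) \sum_(b | b != x) F a b.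
Proof.
rewrite (bigD1 x) //= (bigD1 x) //=.
under [X in _ + _ + X = _]eq_bigr => a _ do rewrite (bigD1 x) //=.
by rewrite big_split /= big_split /= !addnA.
Qed.

Lemma D2 x x' : x' != x ->
  F x x + F x' x' + (F x x' + F x' x) +
  \sum_(b | (b != x) && (b != x')) ((F x b + F b x) + (F x' b + F b x'))
  <= \sum_a \sum_b F a b.
Proof.
move=> hx; rewrite (D1 x).
have e1 : \sum_(b | b != x) (F x b + F b x) =
   (F x x' + F x' x) + \sum_(b | (b != x) && (b != x')) (F x b + F b x).
  by rewrite (bigD1 x').
have e2 : \sum_(a | a != x) \sum_(b | b != x) F a b = \sum_(b | b != x) F x' b +
   \sum_(a | (a != x) && (a != x')) \sum_(b | b != x) F a b.
  by rewrite (bigD1 x').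
have e3 : \sum_(b | b != x) F x' b = F x' x' + \sum_(b | (b != x) && (b != x')) F x' b.
  by rewrite (bigD1 x').
have i4 : \sum_(a | (a != x) && (a != x')) F a x' <=
          \sum_(a | (a != x) && (a != x')) \sum_(b | b != x) F a b.
  by apply: leq_sum => a _; rewrite (bigD1 x') //= leq_addr.
rewrite e1 e2 e3 !big_split /=.
lia.
Qed.
End Decomp.


Section Graph.
Variable T : finType.
Variable g : rel T.
Hypothesis symg : symmetric g.
Hypothesis irrg : irreflexive g.
Variable n : nat.
Hypothesis n3 : 2 < n.
Local Notation V := (T * 'I_n)%type.
Local Notation H := (strong g (cycle_rel n)).
Local Notation sc := (sc n3).
Local Notation pc := (pc n3).

Lemma H_same x i j : H (x, i) (x, j) = (j == sc i) || (j == pc i).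
Proof. by rewrite /strong /= eqxx irrg andbF /= orbF cycE. Qed.

Lemma H_diff x y i j : x != y ->
  H (x, i) (y, j) = g x y && [|| j == i, j == sc i | j == pc i].
Proof.
move=> xy; rewrite /strong /= (negbTE xy) /= (cycE n3) [i == j]eq_sym.
by case: (g x y); rewrite ?andbF ?andbT.
Qed.

Lemma cyc_sym : symmetric (cycle_rel n).
Proof. by move=> i j; rewrite /cycle_rel orbC. Qed.

Lemma H_sym : symmetric H.
Proof.
move=> [x i] [y j]; rewrite /strong /= [y == x]eq_sym [j == i]eq_sym symg cyc_sym.
by [].
Qed.

Definition F (X : {set V}) x y :=
  \sum_i \sum_j (((x, i) \in X) && ((y, j) \notin X) && H (x, i) (y, j) : nat).
Definition fib (X : {set V}) x := fun i => (x, i) \in X.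

Lemma cut_F X : ecnt H X = \sum_x \sum_y F X x y.
Proof.
rewrite /ecnt sum_pair; apply: eq_bigr => x _.
under eq_bigr => i _ do rewrite sum_pair.
by rewrite exchange_big.
Qed.

Lemma F_diag X x : F X x x = Fin n3 (fib X x).
Proof.
rewrite /F /Fin /fib; apply: eq_bigr => i _.
have := nbr2 n3 (fun j => ((x, i) \in X) && ((x, j) \notin X)) i; rewrite /= => <-.
by apply: eq_bigr => j _; rewrite H_same.
Qed.

Lemma F_off X x y : x != y -> F X x y = g x y * Fcr n3 (fib X x) (fib X y).
Proof.
move=> xy; rewrite /F /Fcr /fib; case: (boolP (g x y)) => gxy; last first.
  rewrite mul0n big1 // => i _; rewrite big1 // => j _.
  by rewrite H_diff // (negbTE gxy) andbF.
rewrite mul1n; apply: eq_bigr => i _.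
have := nbr3 n3 (fun j => ((x, i) \in X) && ((y, j) \notin X)) i; rewrite /= => <-.
by apply: eq_bigr => j _; rewrite H_diff // gxy.
Qed.

Lemma deg_sum (x : T) : deg g x = \sum_(y | y != x) (g x y : nat).
Proof. by rewrite /deg card_setsum (bigD1 x) //= irrg. Qed.

Lemma degH x i : deg H (x, i) = 3 * deg g x + 2.
Proof.
rewrite /deg card_setsum sum_pair (bigD1 x) //=.
have := nbr2 n3 (fun _ => true) i; rewrite /= => e1.
under eq_bigr => j _ do rewrite H_same.
rewrite e1.
have -> : \sum_(y | y != x) \sum_j (H (x, i) (y, j) : nat) = \sum_(y | y != x) 3 * (g x y : nat).
  apply: eq_bigr => y yx.
  have := nbr3 n3 (fun _ => g x y) i; rewrite /= => e2.
  have xy : x != y by rewrite eq_sym.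
  under eq_bigr => j _ do rewrite (H_diff _ _ xy).
  by rewrite e2; case: (g x y).
rewrite -big_distrr /= -deg_sum -/(deg g x); lia.
Qed.

Lemma deg_split x x' : x' != x ->
  deg g x = g x x' + \sum_(b | (b != x) && (b != x')) (g x b : nat).
Proof. by move=> xx'; rewrite deg_sum (bigD1 x'). Qed.

Lemma fullF (X : {set V}) (x y : T) : x != y -> (forall i, (x, i) \in X) -> (forall i, (y, i) \notin X) ->
  F X x y = g x y * (3 * n).
Proof.
move=> xy hx hy; rewrite F_off // (Fcr_full n3 (fib X y) hx).
have -> : cnt (fun i => ~~ fib X y i) = cnt (fun _ : 'I_n => true).
  by apply: eq_bigr => i _; rewrite /fib hy.
by rewrite (cnt_all n).
Qed.

Lemma caseI (X : {set V}) (dl : nat) (u1 v1 : V) :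
  (forall x, ~~ mixed (fib X x)) ->
  6 * dl + 2 <= 3 * n * lam g -> u1 \in X -> v1 \notin X ->
  6 * dl + 2 <= \sum_x \sum_y F X x y.
Proof.
move=> nm hl hu hv.
pose A := [set x | [exists i, (x, i) \in X]].
have fullA : forall x, x \in A -> forall i, (x, i) \in X.
  move=> x; rewrite inE => ex; case: (nonmixed (nm x)) => // h.
  by case/existsP: ex => i; move: (h i); rewrite /fib => /negbTE ->.
have emptyA : forall x, x \notin A -> forall i, (x, i) \notin X.
  by move=> x; rewrite inE => /existsPn.
have l1 : lam g <= ecnt g A.
  apply: (lam_le symg (u := u1.1) (w := v1.1)).
    by rewrite inE; apply/existsP; exists u1.2; rewrite -surjective_pairing.
  by apply/negP => /fullA /(_ v1.2); rewrite -surjective_pairing (negbTE hv).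
have l2 : 3 * n * ecnt g A <= \sum_x \sum_y F X x y.
  rewrite /ecnt big_distrr; apply: leq_sum => x _; rewrite big_distrr; apply: leq_sum => y _.
  case: (boolP (x \in A)) => xa; case: (boolP (y \in A)) => ya /=; rewrite ?muln0 //.
  have xy : x != y by apply/eqP => e; move: ya; rewrite -e xa.
  rewrite (fullF xy (fullA _ xa) (emptyA _ ya)); lia.
apply: (leq_trans hl); apply: leq_trans l2; by rewrite leq_mul2l l1 orbT.
Qed.

Lemma caseII (X : {set V}) (dl : nat) (x x' : T) :
  (forall x, dl <= deg g x) -> x' != x ->
  mixed (fib X x) -> mixed (fib X x') ->
  6 * dl + 2 <= \sum_x \sum_y F X x y.
Proof.
move=> hd xx' mx mx'.
apply: leq_trans (D2 (F X) xx').
have h1 : 2 <= F X x x by rewrite F_diag; exact: Fin_mixed.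
have h2 : 2 <= F X x' x' by rewrite F_diag; exact: Fin_mixed.
have xx'' : x != x' by rewrite eq_sym.
have h3 : 4 * g x x' <= F X x x' + F X x' x.
  rewrite !F_off // [g x' x]symg -mulnDr [4 * _]mulnC; apply: leq_mul => //; exact: (K_mixed n3 mx mx').
have h4 : \sum_(b | (b != x) && (b != x')) (3 * (g x b : nat) + 3 * (g x' b : nat)) <=
  \sum_(b | (b != x) && (b != x')) ((F X x b + F X b x) + (F X x' b + F X b x')).
  apply: leq_sum => b /andP[bx bx'].
  have xb : x != b by rewrite eq_sym.
  have x'b : x' != b by rewrite eq_sym.
  apply: leq_add.
    rewrite !F_off // [g b x]symg -mulnDr [3 * _]mulnC; apply: leq_mul => //; exact: (K_one n3 _ mx).
  rewrite !F_off // [g b x']symg -mulnDr [3 * _]mulnC; apply: leq_mul => //; exact: (K_one n3 _ mx').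
rewrite big_split /= -!big_distrr /= in h4.
have d1 := deg_split xx'.
have d2 : deg g x' = g x' x + \sum_(b | (b != x) && (b != x')) (g x' b : nat).
  rewrite (deg_split xx''); congr (_ + _); apply: eq_bigl => b; by rewrite andbC.
have hk : (g x x' : nat) <= 1 by case: (g x x').
move: (hd x) (hd x'); rewrite d1 d2 [g x' x]symg => hdx hdx'.
lia.
Qed.

Lemma arith (dl lm e al be p q : nat) :
  1 <= p -> 1 <= q -> p + q = n -> dl <= al + be ->
  lm <= al + e -> lm <= be + e -> 6 * dl + 2 <= 3 * n * lm ->
  6 * dl <= 3 * (q * al + p * be) + 3 * n * e.
Proof.
move=> hp hq hpq hd hla hlb hl.
case: (leqP lm e) => he.
  have := leq_mul (leqnn n) he; lia.
pose r := lm - e.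
have ra : r <= al by rewrite /r; lia.
have rb : r <= be by rewrite /r; lia.
have m1 : (q - 1) * r <= (q - 1) * al := leq_mul (leqnn _) ra.
have m2 : (p - 1) * r <= (p - 1) * be := leq_mul (leqnn _) rb.
have E1 : q * al = (q - 1) * al + al by rewrite -{1}(subnK hq) mulnDl mul1n.
have E2 : p * be = (p - 1) * be + be by rewrite -{1}(subnK hp) mulnDl mul1n.
have E3 : n * lm = n * e + n * r by rewrite -mulnDr /r subnKC // ltnW.
have E4 : (q - 1) * r + (p - 1) * r + 2 * r = n * r.
  by rewrite -!mulnDl; congr (_ * _); lia.
lia.
Qed.

Lemma caseIII (X : {set V}) (dl : nat) (x : T) (u1 u2 v1 v2 : V) :
  (forall x, dl <= deg g x) -> 6 * dl + 2 <= 3 * n * lam g ->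
  mixed (fib X x) -> (forall y, y != x -> ~~ mixed (fib X y)) ->
  u1 \in X -> u2 \in X -> u1 != u2 -> v1 \notin X -> v2 \notin X -> v1 != v2 ->
  6 * dl + 2 <= \sum_x \sum_y F X x y.
Proof.
move=> hd hl mx nm hu1 hu2 u12 hv1 hv2 v12.
rewrite (D1 (F X) x).
have h1 : 2 <= F X x x by rewrite F_diag; exact: Fin_mixed.
pose p := cnt (fib X x); pose q := cnt (fun i => ~~ fib X x i).
have hpq : p + q = n := cnt_compl _.
have hp1 : 1 <= p by case/andP: mx => ex _; exact: cnt_ge1 ex.
have hq1 : 1 <= q by case/andP: mx => _ ex; exact: cnt_ge1 ex.
have fe : forall y, y != x -> (forall i, (y, i) \in X) \/ (forall i, (y, i) \notin X).
  by move=> y hy; exact: (nonmixed (nm y hy)).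
have Fbx_full : forall b, b != x -> (forall i, (b, i) \in X) -> F X b x = g x b * (3 * q).
  by move=> b bx hb; rewrite F_off // (Fcr_full n3 _ hb) symg.
have Fxb_empty : forall b, b != x -> (forall i, (b, i) \notin X) -> F X x b = g x b * (3 * p).
  by move=> b bx hb; rewrite F_off 1?eq_sym // (Fcr_empty n3 _ hb).
case: (boolP [exists z, (z != x) && [forall i, (z, i) \notin X]]) => [ez|nez]; last first.
  have allfull : forall y, y != x -> forall i, (y, i) \in X.
    move=> y yx; case: (fe y yx) => // he i; move/existsPn: nez => /(_ y).
    by rewrite yx /=; move/forallPn => [j]; rewrite he.
  have vx : forall v, v \notin X -> v.1 = x.
    move=> v hv; apply/eqP; apply/negPn/negP => h; move: (allfull _ h v.2).
    by rewrite -surjective_pairing (negbTE hv).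
  have hq2 : 2 <= q.
    apply: (cnt_ge2 (i := v1.2) (j := v2.2)).
    - apply/eqP => e; move/eqP: v12; apply.
      by rewrite [v1]surjective_pairing [v2]surjective_pairing (vx _ hv1) (vx _ hv2) e.
    - by rewrite /fib -(vx _ hv1) -surjective_pairing.
    - by rewrite /fib -(vx _ hv2) -surjective_pairing.
  have : \sum_(b | b != x) (g x b : nat) * (3 * q) <= \sum_(b | b != x) (F X x b + F X b x).
    by apply: leq_sum => b bx; rewrite (Fbx_full b bx (allfull b bx)) leq_addl.
  rewrite -big_distrl /= -deg_sum => h2.
  have := leq_mul (hd x) hq2; lia.
case: (boolP [exists z, (z != x) && [forall i, (z, i) \in X]]) => [fz|nfz]; last first.
  have allempty : forall y, y != x -> forall i, (y, i) \notin X.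
    move=> y yx; case: (fe y yx) => // he i; move/existsPn: nfz => /(_ y).
    by rewrite yx /=; move/forallPn => [j]; rewrite he.
  have ux : forall u, u \in X -> u.1 = x.
    move=> u hu; apply/eqP; apply/negPn/negP => h; move: (allempty _ h u.2).
    by rewrite -surjective_pairing hu.
  have hp2 : 2 <= p.
    apply: (cnt_ge2 (i := u1.2) (j := u2.2)).
    - apply/eqP => e; move/eqP: u12; apply.
      by rewrite [u1]surjective_pairing [u2]surjective_pairing (ux _ hu1) (ux _ hu2) e.
    - by rewrite /fib -(ux _ hu1) -surjective_pairing.
    - by rewrite /fib -(ux _ hu2) -surjective_pairing.
  have : \sum_(b | b != x) (g x b : nat) * (3 * p) <= \sum_(b | b != x) (F X x b + F X b x).
    by apply: leq_sum => b bx; rewrite (Fxb_empty b bx (allempty b bx)) leq_addr.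
  rewrite -big_distrl /= -deg_sum => h2.
  have := leq_mul (hd x) hp2; lia.
case/existsP: ez => z2 /andP[z2x /forallP hz2].
case/existsP: fz => z1 /andP[z1x /forallP hz1].
pose A := [set y | (y != x) && [forall i, (y, i) \in X]].
pose B := [set y | (y != x) && [forall i, (y, i) \notin X]].
pose i0 : 'I_n := Ordinal (n0 n3).
have AnB : forall y, y \in A -> y \notin B.
  move=> y; rewrite !inE => /andP[_ /forallP h]; apply/negP => /andP[_ /forallP h'].
  by move: (h i0) (h' i0) => ->.
have nAB : forall y, y != x -> y \notin A -> y \in B.
  move=> y yx; rewrite !inE yx /= => /forallPn[i hi]; rewrite /=.
  case: (fe y yx) => h; first by rewrite h in hi.
  by apply/forallP.
have xA : x \notin A by rewrite inE eqxx.
have xB : x \notin B by rewrite inE eqxx.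
pose al := \sum_(b | b != x) (g x b && (b \in A) : nat).
pose be := \sum_(b | b != x) (g x b && (b \in B) : nat).
pose e := \sum_(a | a != x) \sum_(b | b != x) ((a \in A) && (b \in B) && g a b : nat).
have hab : al + be = deg g x.
  rewrite deg_sum /al /be -big_split /=; apply: eq_bigr => b bx.
  case: (boolP (b \in A)) => ba; [rewrite (negbTE (AnB _ ba)) | rewrite (nAB _ bx ba)];
    by case: (g x b).
have hcross : 3 * (q * al + p * be) <= \sum_(b | b != x) (F X x b + F X b x).
  rewrite /al /be !big_distrr -big_split /= big_distrr /=; apply: leq_sum => b bx.
  case: (boolP (b \in A)) => ba.
    have hb : forall i, (b, i) \in X by move: ba; rewrite inE => /andP[_ /forallP].
    rewrite (negbTE (AnB _ ba)) (Fbx_full b bx hb) !andbT !andbF !muln0 addn0.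
    by case: (g x b); rewrite /= ?muln1 ?mul1n ?leq_addl ?muln0.
  have bB := nAB _ bx ba.
  have hb : forall i, (b, i) \notin X by move: bB; rewrite inE => /andP[_ /forallP].
  rewrite bB (Fxb_empty b bx hb) !andbT !andbF !muln0 add0n.
  by case: (g x b); rewrite /= ?muln1 ?mul1n ?leq_addr ?muln0.
have hAA : 3 * n * e <= \sum_(a | a != x) \sum_(b | b != x) F X a b.
  rewrite /e big_distrr; apply: leq_sum => a ax; rewrite big_distrr; apply: leq_sum => b bx.
  case: (boolP (a \in A)) => aa; case: (boolP (b \in B)) => bb /=; rewrite ?muln0 //.
  case: (boolP (g a b)) => gab /=; last by rewrite muln0.
  have ab : a != b by apply/eqP => eab; move: (AnB _ aa); rewrite eab bb.
  have ha : forall i, (a, i) \in X by move: aa; rewrite inE => /andP[_ /forallP].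
  have hb : forall i, (b, i) \notin X by move: bb; rewrite inE => /andP[_ /forallP].
  by rewrite (fullF ab ha hb) gab mul1n muln1.
have hlA : lam g <= al + e.
  apply: (leq_trans (lam_le symg (A := A) (u := z1) (w := x) _ xA)).
    by rewrite inE z1x; apply/forallP.
  rewrite /ecnt (bigD1 x) //= big1 ?add0n; last by move=> b _; rewrite (negbTE xA).
  rewrite /al /e -big_split /=; apply: leq_sum => a ax.
  rewrite (bigD1 x) //= xA andbT [g a x]symg; apply: leq_add; first by rewrite andbC.
  apply: leq_sum => b bx; case: (boolP (b \in A)) => ba /=; first by rewrite andbF.
  by rewrite (nAB _ bx ba).
have hlB : lam g <= be + e.
  apply: (leq_trans (lam_le symg (A := ~: B) (u := x) (w := z2) _ _)).
  - by rewrite in_setC xB.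
  - by rewrite in_setC negbK inE z2x; apply/forallP.
  rewrite /ecnt (bigD1 x) //=; apply: leq_add.
    rewrite (bigD1 x) //= !in_setC xB /= add0n /be; apply: leq_sum => b bx.
    by rewrite in_setC negbK andbC.
  rewrite /e; apply: leq_sum => a ax.
  rewrite (bigD1 x) //= !in_setC xB andbF add0n; apply: leq_sum => b bx.
  rewrite !in_setC negbK.
  case: (boolP (a \in A)) => aa; first by rewrite (negbTE (AnB _ aa)).
  by rewrite (nAB _ ax aa).
have hdab : dl <= al + be by rewrite hab.
have key := arith hp1 hq1 hpq hdab hlA hlB hl.
lia.
Qed.
End Graph.


Section Final.
Variable T : finType.
Variable g : rel T.
Hypothesis symg : symmetric g.
Hypothesis irrg : irreflexive g.
Variable n : nat.
Hypothesis n3 : 2 < n.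
Local Notation V := (T * 'I_n)%type.
Local Notation H := (strong g (cycle_rel n)).
Local Notation sc := (sc n3).
Local Notation pc := (pc n3).

Lemma main_cut (X : {set V}) (dl : nat) (u1 u2 v1 v2 : V) :
  (forall x, dl <= deg g x) -> 6 * dl + 2 <= 3 * n * lam g ->
  u1 \in X -> u2 \in X -> u1 != u2 -> v1 \notin X -> v2 \notin X -> v1 != v2 ->
  6 * dl + 2 <= ecnt H X.
Proof.
move=> hd hl hu1 hu2 u12 hv1 hv2 v12; rewrite cut_F.
case: (boolP [exists x, mixed (fib X x)]) => [/existsP[x mx]|nm].
  case: (boolP [exists x', (x' != x) && mixed (fib X x')]) => [/existsP[x' /andP[xx' mx']]|nm2].
    exact: (caseII symg irrg n3 hd xx' mx mx').
  apply: (caseIII symg irrg n3 hd hl mx _ hu1 hu2 u12 hv1 hv2 v12).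
  move=> y yx; apply/negP => my; move/existsPn: nm2 => /(_ y); by rewrite yx my.
apply: (caseI symg n3 _ hl hu1 hv1) => x.
by move/existsPn: nm => /(_ x).
Qed.

Lemma rcut_lb (S : {set {set V}}) (dl : nat) :
  (forall x, dl <= deg g x) -> 6 * dl + 2 <= 3 * n * lam g ->
  is_restricted_edge_cut H S -> 6 * dl + 2 <= #|S|.
Proof.
move=> hd hl /andP[/andP[Ssub /existsP[u0 /existsP[v0 nc]]] /forallP hall].
pose R := remove_edges H S.
have symR : symmetric R.
  by move=> x y; rewrite /R /remove_edges (H_sym symg) setUC.
pose X := [set w | connect R u0 w].
case/existsP: (hall u0) => u1 /andP[u10 cu1].
case/existsP: (hall v0) => v1 /andP[v10 cv1].
have hu0 : u0 \in X by rewrite inE connect0.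
have hu1 : u1 \in X by rewrite inE.
have hv0 : v0 \notin X by rewrite inE.
have hv1 : v1 \notin X.
  rewrite inE; apply/negP => c; move/negP: nc; apply.
  apply: (connect_trans c); by rewrite (sym_connect_sym symR).
have := main_cut hd hl hu0 hu1 _ hv0 hv1 _; rewrite eq_sym u10 eq_sym v10 => /(_ isT isT) h.
apply: (leq_trans h); rewrite -Bd_card; apply: subset_leq_card.
apply/subsetP => S' /imsetP[[a b]]; rewrite !inE /= => /andP[/andP[ha hb] hab] ->.
apply/negPn/negP => nS; move/negP: hb; apply.
apply: (connect_trans ha); apply: connect1; by rewrite /R /remove_edges hab nS.
Qed.

Lemma notBd (A : {set V}) u w :
  ((u \in A) = (w \in A)) -> [set u; w] \notin Bd H A.
Proof.
move=> e; apply/negP => hS.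
case: (Bd_mem hS) => a ha aS; case: (Bd_mem' hS) => b hb bS.
move: aS bS ha hb; rewrite !inE => /orP[/eqP->|/eqP->] /orP[/eqP->|/eqP->];
  by rewrite ?e => ->.
Qed.

Definition i0 : 'I_n := Ordinal (n0 n3).
Local Notation X0 x0 := ([set (x0, i0); (x0, sc i0)] : {set V}).

Lemma nbr_out (A : {set V}) u u' : u' \in A -> H u u' ->
  \sum_w ((w \notin A) && H u w : nat) + 1 <= deg H u.
Proof.
move=> hu' huu'; rewrite /deg card_setsum [X in _ <= X](bigD1 u') //= huu' addnC leq_add2l.
rewrite (bigD1 u') //= hu' /= add0n; apply: leq_sum => w _; by case: (w \notin A).
Qed.

Lemma S0_restr x0 z : g x0 z -> is_restricted_edge_cut H (Bd H (X0 x0)).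
Proof.
move=> gz.
have zx : z != x0 by apply/eqP => e; move: gz; rewrite e irrg.
have xz : x0 != z by rewrite eq_sym.
have symH := H_sym symg (n := n).
rewrite /is_restricted_edge_cut /is_edge_cut Bd_sub /=; apply/andP; split.
  apply/existsP; exists (x0, i0); apply/existsP; exists (z, i0); apply: Bd_disc => //.
    by rewrite !inE eqxx.
  by rewrite !inE !xpair_eqE (negbTE zx).
apply/forallP => -[y j].
case: (boolP ((y, j) \in X0 x0)) => hin.
  have : (y == x0) && ((j == i0) || (j == sc i0)).
    by move: hin; rewrite !inE !xpair_eqE -andb_orr.
  case/andP => /eqP ey /orP[/eqP ej|/eqP ej]; subst y j.
    apply/existsP; exists (x0, sc i0); rewrite xpair_eqE eqxx (sc_neq n3) /=.
    apply: connect1; rewrite /remove_edges (H_same irrg n3) eqxx /= notBd //.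
    by rewrite !inE !eqxx orbT.
  apply/existsP; exists (x0, i0); rewrite xpair_eqE eqxx eq_sym (sc_neq n3) /=.
  apply: connect1; rewrite /remove_edges (H_same irrg n3) (scK n3) eqxx orbT /= notBd //.
  by rewrite !inE !eqxx orbT.
case: (eqVneq y x0) => [eyx|nyx].
  subst y; apply/existsP; exists (z, j); rewrite xpair_eqE (negbTE zx) /=.
  apply: connect1; rewrite /remove_edges (H_diff g n3 _ _ xz) gz eqxx /= notBd //.
  by rewrite (negbTE hin) !inE !xpair_eqE (negbTE zx).
apply/existsP; exists (y, sc j); rewrite xpair_eqE eqxx (sc_neq n3) /=.
apply: connect1; rewrite /remove_edges (H_same irrg n3) eqxx /= notBd //.
by rewrite (negbTE hin) !inE !xpair_eqE (negbTE nyx).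
Qed.

Lemma S0_card x0 : #|Bd H (X0 x0)| <= 6 * deg g x0 + 2.
Proof.
rewrite Bd_card /ecnt.
have h : forall u, \sum_w ((u \in X0 x0) && (w \notin X0 x0) && H u w : nat) <=
   (if u \in X0 x0 then 3 * deg g x0 + 1 else 0).
  move=> u; case: (boolP (u \in X0 x0)) => hu /=; last by rewrite big1.
  have : (u == (x0, i0)) || (u == (x0, sc i0)) by move: hu; rewrite !inE.
  case/orP => /eqP eu; subst u.
    have := nbr_out (A := X0 x0) (u := (x0, i0)) (u' := (x0, sc i0)).
    rewrite (degH irrg n3) !inE !eqxx orbT (H_same irrg n3) eqxx /= => /(_ isT isT); lia.
  have := nbr_out (A := X0 x0) (u := (x0, sc i0)) (u' := (x0, i0)).
  rewrite (degH irrg n3) !inE !eqxx (H_same irrg n3) (scK n3) eqxx orbT /= => /(_ isT isT); lia.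
apply: (@leq_trans (\sum_u (if u \in X0 x0 then 3 * deg g x0 + 1 else 0))).
  by apply: leq_sum => u _; exact: h.
rewrite -big_mkcond sum_nat_const cards2 xpair_eqE eqxx eq_sym (sc_neq n3) /=; lia.
Qed.

Lemma xi_val x0 : (forall x, deg g x0 <= deg g x) -> deg g x0 < #|T| ->
  xi H = 6 * deg g x0 + 2.
Proof.
move=> hd hlt; apply/eqP; rewrite /xi eqn_leq; apply/andP; split.
  have hp : H (x0, i0) (x0, sc i0) by rewrite (H_same irrg n3) eqxx.
  have := bigmin_le (P := fun p : V * V => H p.1 p.2)
    (fun p : V * V => deg H p.1 + deg H p.2 - 2) (2 * #|{: V}|) (i := ((x0, i0), (x0, sc i0))) hp.
  rewrite /= !(degH irrg n3) => h; apply: (leq_trans h); lia.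
apply: bigmin_ge.
  rewrite card_prod card_ord.
  have : 3 * #|T| <= #|T| * n by rewrite mulnC leq_mul2l n3 orbT.
  lia.
move=> [[x i] [y j]] _ /=; rewrite !(degH irrg n3); have := hd x; have := hd y; lia.
Qed.

Lemma lamp_val x0 z : g x0 z -> (forall x, deg g x0 <= deg g x) ->
  6 * deg g x0 + 2 <= 3 * n * lam g -> lam' H = 6 * deg g x0 + 2.
Proof.
move=> gz hd hl.
have hr := S0_restr gz.
have hc := S0_card x0.
have hlb := rcut_lb hd hl hr.
apply/eqP; rewrite /lam' eqn_leq; apply/andP; split.
  have := bigmin_le (P := is_restricted_edge_cut H) (fun S : {set {set V}} => #|S|)
    (#|edges H|).+1 hr.
  move=> h; exact: leq_trans h hc.
apply: bigmin_ge.
  apply: (leq_trans hlb); apply: leq_trans (subset_leq_card (Bd_sub H (X0 x0))) _.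
  exact: leqnSn.
by move=> S hS; exact: rcut_lb hd hl hS.
Qed.
End Final.

Theorem corollary3p5 (T : finType) (g : rel T) (n : nat) :
  symmetric g -> irreflexive g ->
  1 < #|T| -> connected g -> 3 <= n ->
  6 * mindeg g + 2 <= minn (3 * n * lam g) (2 * (#|T| + 2 * #|edges g|)) ->
  lam' (strong g (cycle_rel n)) = xi (strong g (cycle_rel n)).
Proof.
move=> symg irrg hT conn n3 hmin.
have degl : forall x, deg g x < #|T|.
  move=> x; rewrite /deg -cardsT; apply: proper_card; rewrite properT; apply/eqP => e.
  have : x \in [set y | g x y] by rewrite e inE.
  by rewrite inE irrg.
have : 0 < #|T| by lia.
case/card_gt0P => t0 _.
have [x0 ex0] : exists x0, mindeg g = deg g x0.
  by apply: bigmin_arg; exists t0; exact: degl.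
have hd : forall x, deg g x0 <= deg g x by move=> x; rewrite -ex0; apply: bigmin_le.
have hl : 6 * deg g x0 + 2 <= 3 * n * lam g.
  by rewrite -ex0; exact: leq_trans hmin (geq_minl _ _).
have [w wx0] : exists w, w != x0.
  case: (pickP (fun w => w != x0)) => [w hw|h]; first by exists w.
  move: hT; rewrite -cardsT (_ : [set: T] = [set x0]) ?cards1 //.
  by apply/setP => y; rewrite !inE (negbFE (h y)).
have [z gz] : exists z, g x0 z.
  case/connectP: (conn x0 w) => p; case: p => [_ /= e|z p /= /andP[gz _] _]; last by exists z.
  by rewrite e eqxx in wx0.
by rewrite (lamp_val symg irrg n3 gz hd hl) (xi_val irrg n3 hd (degl x0)).
Qed.
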